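(* Let $\mathcal G=(G,f,h)$ be a network dynamical system of size $N$ with maximum out-degree $\Delta(G)$, satisfying Assumptions 1 and 2. For each $q\in[N]$ let $\phi_q\in\mathbb R^{P\times N}$ ($P<N$) satisfy $\delta_{2(\Delta(G)+1)}(\phi_q)<\sqrt2-1$. For each $q\in[N]$ let $x^q(1)$ be the time-1 state of the trajectory from a $q$-pinching initial condition and $y^q(1)=\phi_q x^q(1)$. Then for every $q\in[N]$ the convex problem $$\min_{\tilde x\in\mathbb R^N}\|\tilde x\|_1\quad\text{subject to}\quad \phi_q\tilde x=y^q(1)$$ has a unique solution $x^q_*(1)$, and $x^q_*(1)=x^q(1)$. Moreover $\operatorname{supp}(x^q(1))\setminus\{q\}=L_1(q)$ for every $q$, so the adjacency matrix is uniquely determined via $A_{ij}=1$ iff $i\neq j$ and $i\in\operatorname{supp}(x^j_*(1))$.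
   Context: Let $G$ be a directed graph on vertex set $[N]=\{1,\dots,N\}$ without self-loops, with adjacency matrix $A\in\{0,1\}^{N\times N}$, where $A_{ij}=1$ if and only if $i$ receives an edge (input) from $j$; in particular $A_{ii}=0$. The out-degree of $q\in[N]$ is $d_q=\#\{i: A_{iq}=1\}$, the maximum out-degree is $\Delta(G)=\max_{q}d_q$, and the first-level set of $q$ is $L_1(q)=\{i\in[N]: A_{iq}=1\}$. The network dynamical system $\mathcal G=(G,f,h)$ is the discrete-time system $x_i(t+1)=f_i(x_i(t))+\sum_{j=1}^N A_{ij}h_{ij}(x_i(t),x_j(t))$ for $i\in[N]$, $t=0,1,2,\dots$, where $f_i:\mathbb R\to\mathbb R$ and $h_{ij}:\mathbb R\times\mathbb R\to\mathbb R$; the state vector is $x(t)=(x_1(t),\dots,x_N(t))^T$. Assumption 1: $f_i(0)=0$ for all $i\in[N]$. Assumption 2: there is $\delta>0$ such that for all $i,j\in[N]$, $h_{ij}(0,0)=0$ and $h_{ij}(0,v)\neq 0$ for every $v$ with $0<|v|<\delta$. For $q\in[N]$, a $q$-pinching initial condition is $x^q(0)$ with $x^q_i(0)=\epsilon_q\delta_{iq}$ (Kronecker delta), where $0<|\epsilon_q|<\delta$; $x^q(t)$ denotes the resulting trajectory. For $x\in\mathbb R^N$, $\operatorname{supp}(x)=\{i: x_i\neq0\}$ and $\|x\|_0=\#\operatorname{supp}(x)$; $x$ is $s$-sparse if $\|x\|_0\le s$. The restricted isometry constant $\delta_s(\phi)$ of $\phi\in\mathbb R^{P\times N}$ is the smallest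 number such that $(1-\delta_s(\phi))\|x\|_2^2\le\|\phi x\|_2^2\le(1+\delta_s(\phi))\|x\|_2^2$ for all $s$-sparse $x\in\mathbb R^N$. *)

(* Defs.v *)
From HB Require Import structures.
From mathcomp Require Import all_boot all_order all_algebra.
From mathcomp Require Import all_classical all_reals.
Set Implicit Arguments. Unset Strict Implicit. Unset Printing Implicit Defensive.
Import Order.TTheory GRing.Theory Num.Theory.
Local Open Scope ring_scope.
Local Open Scope classical_set_scope.

Section Defs.
Variable R : realType.

(* Adjacency: A i j = true iff i receives an edge (input) from j. *)
Definition outdeg N (A : 'I_N -> 'I_N -> bool) (q : 'I_N) : nat := #|[set i | A i q]|.
Definition maxoutdeg N (A : 'I_N -> 'I_N -> bool) : nat := (\max_(q < N) outdeg A q)%N.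
Definition L1 N (A : 'I_N -> 'I_N -> bool) (q : 'I_N) : {set 'I_N} := [set i | A i q].

Definition nds_step N (A : 'I_N -> 'I_N -> bool) (f : 'I_N -> R -> R)
  (h : 'I_N -> 'I_N -> R -> R -> R) (x : 'cV[R]_N) : 'cV[R]_N :=
  \col_i (f i (x i 0) + \sum_(j < N) (if A i j then h i j (x i 0) (x j 0) else 0)).

Definition pinch N (q : 'I_N) (eps : R) : 'cV[R]_N :=
  \col_i (if i == q then eps else 0).

Definition supp N (x : 'cV[R]_N) : {set 'I_N} := [set i | x i 0 != 0].
Definition sparse N (s : nat) (x : 'cV[R]_N) : Prop := (#|supp x| <= s)%N.
Definition norm2sq N (x : 'cV[R]_N) : R := \sum_(i < N) (x i 0) ^+ 2.
Definition norm1 N (x : 'cV[R]_N) : R := \sum_(i < N) `|x i 0|.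

Definition ric N P (s : nat) (phi : 'M[R]_(P, N)) : R :=
  inf [set d : R | forall x : 'cV[R]_N, sparse s x ->
        (1 - d) * norm2sq x <= norm2sq (phi *m x) <= (1 + d) * norm2sq x].

Definition l1_solution N P (phi : 'M[R]_(P, N)) (y : 'cV[R]_P) (xs : 'cV[R]_N) : Prop :=
  phi *m xs = y /\ forall z : 'cV[R]_N, phi *m z = y -> norm1 xs <= norm1 z.

End Defs.

(* Main.v *)
Require Import Defs.
From HB Require Import structures.
From mathcomp Require Import all_boot all_order all_algebra.
From mathcomp Require Import all_classical all_reals.
From mathcomp Require Import zify ring lra.
Import Order.TTheory GRing.Theory Num.Theory.
Local Open Scope ring_scope.
Set Implicit Arguments. Unset Strict Implicit. Unset Printing Implicit Defensive.

Lemma card_ltset n c : #|[set m : 'I_n | (m < c)%N]| = minn c n.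
Proof.
case: (leqP c n) => hc.

  have -> : [set m : 'I_n | (m < c)%N] = widen_ord hc @: [set: 'I_c].
    apply/setP => m; rewrite !inE; apply/idP/imsetP.
      by move=> hm; exists (Ordinal hm) => //; apply/val_inj.
    by case=> k _ ->; rewrite /= ltn_ord.
  by rewrite card_imset ?cardsT ?card_ord //; by move=> x y /(congr1 val) /= e; apply: val_inj.

have -> : [set m : 'I_n | (m < c)%N] = [set: 'I_n].
  by apply/setP => m; rewrite !inE (ltn_trans (ltn_ord m) hc).
by rewrite cardsT card_ord.
Qed.

Lemma card_intset n lo hi : (lo <= hi)%N ->
  #|[set m : 'I_n | (lo <= m < hi)%N]| = (minn hi n - minn lo n)%N.
Proof.
move=> hlh.
have -> : [set m : 'I_n | (lo <= m < hi)%N] =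
  [set m : 'I_n | (m < hi)%N] :\: [set m : 'I_n | (m < lo)%N].
  by apply/setP => m; rewrite !inE -leqNgt andbC.
rewrite cardsD.
have -> : [set m : 'I_n | (m < hi)%N] :&: [set m : 'I_n | (m < lo)%N]
  = [set m : 'I_n | (m < lo)%N].
  apply/finset.setIidPr/fintype.subsetP => m; rewrite !inE => h; exact: leq_trans h hlh.
by rewrite !card_ltset.
Qed.

Lemma card_intset_le n lo hi :
  (#|[set m : 'I_n | (lo <= m < hi)%N]| <= hi - lo)%N.
Proof.
case: (leqP lo hi) => hlh.
  rewrite card_intset //; lia.
have -> : [set m : 'I_n | (lo <= m < hi)%N] = finset.set0.
  by apply/setP => m; rewrite !inE; apply/negbTE; lia.
by rewrite cards0.
Qed.

Lemma div_range (s k m : nat) : (0 < s)%N -> (k * s <= m)%N -> (m < k * s + s)%N ->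
  (m %/ s = k)%N.
Proof.
move=> s0 h1 h2; rewrite (_ : m = k * s + (m - k * s))%N; last by lia.
rewrite divnMDl // divn_small ?addn0 //; lia.
Qed.

Section Blocks.
Variable R : realType.
Variables (N s : nat) (U : {set 'I_N}) (a : 'I_N -> R).
Hypothesis s_gt0 : (0 < s)%N.

Definition prec (i j : 'I_N) : bool := (a j < a i) || ((a i == a j) && (i < j)%N).
Definition pr (j : 'I_N) := [set i in U | prec i j].
Definition rank (j : 'I_N) : nat := #|pr j|.
Definition blk (j : 'I_N) : nat := (rank j %/ s)%N.

Lemma prec_irr i : ~~ prec i i.
Proof. by rewrite /prec ltxx ltnn andbF. Qed.

Lemma prec_trans i j k : prec i j -> prec j k -> prec i k.
Proof.
rewrite /prec => /orP[hij|/andP[/eqP eij hij]] /orP[hjk|/andP[/eqP ejk hjk]].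
- by rewrite (lt_trans hjk hij).
- by rewrite -ejk hij.
- by rewrite eij hjk.
- by rewrite eij ejk eqxx (ltn_trans hij hjk) orbT.
Qed.

Lemma prec_total i j : i != j -> prec i j || prec j i.
Proof.
move=> nij; rewrite /prec.
case: (ltgtP (a i) (a j)) => //= e.
by rewrite -neq_ltn.
Qed.

Lemma rank_le j : (rank j <= N)%N.
Proof. by rewrite /rank -[X in (_ <= X)%N](card_ord N) max_card. Qed.

Lemma rank_lt i j : i \in U -> prec i j -> (rank i < rank j)%N.
Proof.
move=> iU pij; rewrite /rank; apply: proper_card.
apply/properP; split.
  apply/fintype.subsetP => k; rewrite !inE => /andP[-> pki] /=.
  exact: prec_trans pki pij.
by exists i; rewrite !inE ?iU ?pij ?prec_irr.
Qed.

Lemma rank_inj i j : i \in U -> j \in U -> rank i = rank j -> i = j.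
Proof.
move=> iU jU e; apply/eqP; apply/negPn/negP => nij.
case/orP: (prec_total nij) => p.
  by have := rank_lt iU p; rewrite e ltnn.
by have := rank_lt jU p; rewrite e ltnn.
Qed.

Definition frk (j : 'I_N) : 'I_N.+1 := inord (rank j).

Lemma frkE j : nat_of_ord (frk j) = rank j.
Proof. by rewrite /frk inordK // ltnS rank_le. Qed.

Lemma frk_inj : {in U &, injective frk}.
Proof.
move=> i j iU jU e; apply: rank_inj => //; by rewrite -!frkE e.
Qed.

Lemma rank_surj i m : i \in U -> (m < rank i)%N ->
  exists2 j, j \in U & rank j = m /\ prec j i.
Proof.
move=> iU hm.
have sub : frk @: pr i \subset [set k : 'I_N.+1 | (0 <= k < rank i)%N].
  apply/fintype.subsetP => k /imsetP[j]; rewrite !inE => /andP[jU pji] ->.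
  by rewrite frkE rank_lt.
have ceq : (#|[set k : 'I_N.+1 | (0 <= k < rank i)%N]| <= #|frk @: pr i|)%N.
  rewrite card_intset // card_in_imset; last first.
    by move=> x y; rewrite !inE => /andP[xU _] /andP[yU _]; apply: frk_inj.
  rewrite /rank; have := rank_le i; rewrite /rank => hl.
  rewrite (_ : minn 0 N.+1 = 0)%N; last by lia.
  rewrite (_ : minn #|pr i| N.+1 = #|pr i|)%N; last by lia.
  by rewrite subn0.
have E : frk @: pr i = [set k : 'I_N.+1 | (0 <= k < rank i)%N].
  by apply/eqP; rewrite eqEcard sub ceq.
have : (inord m : 'I_N.+1) \in [set k : 'I_N.+1 | (0 <= k < rank i)%N].
  rewrite inE inordK //=; last by rewrite ltnS (leq_trans (ltnW hm)) ?rank_le.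
rewrite -E => /imsetP[j]; rewrite inE => /andP[jU pji] ej.
exists j => //; split => //.
have : nat_of_ord (frk j) = nat_of_ord (inord m : 'I_N.+1) by rewrite ej.
rewrite frkE inordK // ltnS (leq_trans (ltnW hm)) ?rank_le //.
Qed.

Definition Bk (k : nat) : {set 'I_N} := [set i in U | blk i == k].

Lemma blk_lt i : (blk i < N.+1)%N.
Proof. rewrite /blk ltnS; apply: leq_trans (leq_div _ _) (rank_le i). Qed.

Lemma Bk_card k : (#|Bk k| <= s)%N.
Proof.
rewrite -(card_in_imset (f:=frk)); last first.
  by move=> x y; rewrite !inE => /andP[xU _] /andP[yU _]; apply: frk_inj.
have := card_intset_le N.+1 (k * s) (k * s + s); rewrite addKn => H.
apply: leq_trans H.
apply: subset_leq_card; apply/fintype.subsetP => m /imsetP[j]; rewrite !inE.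
move=> /andP[jU /eqP bj] ->; rewrite frkE.
move: bj; rewrite /blk => <-.
have := divn_eq (rank j) s; have := ltn_mod (rank j) s; rewrite s_gt0.
move=> h1 h2; apply/andP; split; lia.
Qed.

Lemma Bk_full k i : i \in U -> blk i = k.+1 -> (s <= #|Bk k|)%N.
Proof.
move=> iU bi.
have hr : (k.+1 * s <= rank i)%N.
  have := divn_eq (rank i) s; rewrite -/(blk i) bi => ->; exact: leq_addr.
have hN := rank_le i.
have := card_intset N.+1 (leq_addr s (k * s)).
rewrite (_ : minn (k * s + s) N.+1 = k * s + s)%N; last by rewrite mulSn in hr; lia.
rewrite (_ : minn (k * s) N.+1 = k * s)%N; last by rewrite mulSn in hr; lia.
rewrite addKn => <-.
apply: leq_trans (leq_imset_card frk _).
apply: subset_leq_card; apply/fintype.subsetP => m; rewrite inE => /andP[h1 h2].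
have mlt : (m < rank i)%N by rewrite mulSn in hr; lia.
have [j jU [rj _]] := rank_surj iU mlt.
apply/imsetP; exists j.
  rewrite inE jU /= /blk rj; apply/eqP.
  exact: div_range.
by apply/val_inj => /=; rewrite frkE rj.
Qed.

Lemma blk_mono k i j : i \in U -> j \in U -> blk i = k.+1 -> blk j = k -> a i <= a j.
Proof.
move=> iU jU bi bj.
have nij : i != j by apply/eqP => e; move: bi; rewrite e bj => /n_Sn.
have hr : (rank j < rank i)%N.
  rewrite ltnNge; apply/negP => h; have := leq_div2r s h.
  by rewrite -/(blk i) -/(blk j) bi bj ltnn.
case/orP: (prec_total nij) => p.
  by have := rank_lt iU p; rewrite ltnNge (ltnW hr).
move: p; rewrite /prec => /orP[/ltW //|/andP[/eqP -> _]] //.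
Qed.

Lemma Bk_ineq k : (forall i, 0 <= a i) ->
  s%:R * \sum_(i in Bk k.+1) a i ^+ 2 <= (\sum_(j in Bk k) a j) ^+ 2.
Proof.
move=> a0.
have [E|[i0 i0B]] := set_0Vmem (Bk k.+1).
  by rewrite E big_set0 mulr0 sqr_ge0.
have cB : #|Bk k| = s.
  apply/eqP; rewrite eqn_leq Bk_card.
  by move: i0B; rewrite inE => /andP[i0U /eqP b0]; rewrite (Bk_full i0U b0).
set L := \sum_(j in Bk k) a j.
have L0 : 0 <= L by apply: sumr_ge0.
have hi : forall i, i \in Bk k.+1 -> s%:R * a i <= L.
  move=> i; rewrite inE => /andP[iU /eqP bi].
  rewrite -cB mulr_natl -sumr_const /L; apply: ler_sum => j; rewrite inE => /andP[jU /eqP bj].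
  exact: blk_mono iU jU bi bj.
have s0 : 0 < (s%:R : R) by rewrite ltr0n.
rewrite -(ler_pM2l s0) mulrA -expr2 mulr_sumr.
apply: (le_trans (y := \sum_(i in Bk k.+1) L ^+ 2)).
  apply: ler_sum => i iB; rewrite -exprMn.
  have := hi i iB; have := a0 i => h1 h2.
  rewrite !expr2; apply: ler_pM => //; exact: mulr_ge0 (ltW s0) h1.
rewrite sumr_const -(mulr_natl (L ^+ 2) #|Bk k.+1|); apply: ler_wpM2r; first exact: sqr_ge0.
by rewrite ler_nat Bk_card.
Qed.
End Blocks.


Section Vec.
Variable R : realType.

Definition dot n (u v : 'cV[R]_n) : R := \sum_i u i 0 * v i 0.
Definition nrm n (u : 'cV[R]_n) : R := Num.sqrt (norm2sq u).
Definition RIP N P (s : nat) (phi : 'M[R]_(P, N)) (d : R) : Prop :=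
  forall x : 'cV[R]_N, sparse s x ->
    (1 - d) * norm2sq x <= norm2sq (phi *m x) <= (1 + d) * norm2sq x.

Lemma norm2sq_ge0 n (u : 'cV[R]_n) : 0 <= norm2sq u.
Proof. by apply: sumr_ge0 => i _; exact: sqr_ge0. Qed.

Lemma norm2sq_dot n (u : 'cV[R]_n) : norm2sq u = dot u u.
Proof. by apply: eq_bigr => i _; rewrite expr2. Qed.

Lemma dotC n (u v : 'cV[R]_n) : dot u v = dot v u.
Proof. by apply: eq_bigr => i _; rewrite mulrC. Qed.

Lemma dotDl n (u v w : 'cV[R]_n) : dot (u + v) w = dot u w + dot v w.
Proof. by rewrite /dot -big_split; apply: eq_bigr => i _; rewrite mxE mulrDl. Qed.

Lemma dotZl n c (u v : 'cV[R]_n) : dot (c *: u) v = c * dot u v.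
Proof. by rewrite /dot mulr_sumr; apply: eq_bigr => i _; rewrite mxE mulrA. Qed.

Lemma dotNl n (u v : 'cV[R]_n) : dot (- u) v = - dot u v.
Proof. by rewrite /dot -sumrN; apply: eq_bigr => i _; rewrite mxE mulNr. Qed.

Lemma dotDr n (u v w : 'cV[R]_n) : dot w (u + v) = dot w u + dot w v.
Proof. by rewrite !(dotC w) dotDl. Qed.
Lemma dotZr n c (u v : 'cV[R]_n) : dot v (c *: u) = c * dot v u.
Proof. by rewrite !(dotC v) dotZl. Qed.
Lemma dotNr n (u v : 'cV[R]_n) : dot v (- u) = - dot v u.
Proof. by rewrite !(dotC v) dotNl. Qed.

Lemma dot_sumr n (I : finType) (F : I -> 'cV[R]_n) w :
  dot w (\sum_i F i) = \sum_i dot w (F i).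
Proof.
rewrite /dot exchange_big /=; apply: eq_bigr => j _.
by rewrite summxE mulr_sumr.
Qed.

Lemma norm2sqD n (u v : 'cV[R]_n) :
  norm2sq (u + v) = norm2sq u + 2 * dot u v + norm2sq v.
Proof. by rewrite !norm2sq_dot dotDl !dotDr (dotC v u); ring. Qed.

Lemma norm2sqN n (u : 'cV[R]_n) : norm2sq (- u) = norm2sq u.
Proof. by rewrite !norm2sq_dot dotNl dotNr opprK. Qed.

Lemma norm2sqZ n c (u : 'cV[R]_n) : norm2sq (c *: u) = c ^+ 2 * norm2sq u.
Proof. by rewrite !norm2sq_dot dotZl dotZr mulrA expr2. Qed.

Lemma norm2sq_eq0 n (u : 'cV[R]_n) : norm2sq u = 0 -> u = 0.
Proof.
move=> /eqP; rewrite psumr_eq0 => [/allP H|i _]; last exact: sqr_ge0.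
apply/matrixP => i j; rewrite (ord1 j) mxE.
by have := H i (mem_index_enum _); rewrite /= sqrf_eq0 => /eqP.
Qed.

Lemma nrm_ge0 n (u : 'cV[R]_n) : 0 <= nrm u.
Proof. exact: sqrtr_ge0. Qed.

Lemma nrm_sq n (u : 'cV[R]_n) : nrm u ^+ 2 = norm2sq u.
Proof. by rewrite sqr_sqrtr // norm2sq_ge0. Qed.

Lemma nrm_eq0 n (u : 'cV[R]_n) : nrm u = 0 -> u = 0.
Proof. by move=> h; apply: norm2sq_eq0; rewrite -nrm_sq h expr0n. Qed.

Lemma supp_sub n (u v : 'cV[R]_n) : (forall i, u i 0 = 0 -> v i 0 = 0) ->
  (supp v \subset supp u)%N.
Proof.
move=> H; apply/fintype.subsetP => i; rewrite !inE; apply: contra => /eqP h.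
by rewrite H.
Qed.

Lemma cross N P s (phi : 'M[R]_(P, N)) d (u v : 'cV[R]_N) :
  RIP s phi d -> (forall i, u i 0 = 0 \/ v i 0 = 0) ->
  (#|supp u :|: supp v| <= s)%N ->
  dot (phi *m u) (phi *m v) <= d * nrm u * nrm v.
Proof.
move=> rip dis cs.
have [a0|ap] := eqVneq (nrm u) 0.
  rewrite a0 mulr0 mul0r (nrm_eq0 a0) mulmx0 /dot big1 // => i _; by rewrite mxE mul0r.
have [b0|bp] := eqVneq (nrm v) 0.
  rewrite b0 mulr0 (nrm_eq0 b0) mulmx0 /dot big1 // => i _; by rewrite !mxE mulr0.
set a := nrm u in ap *; set b := nrm v in bp *.
have a0 : 0 < a by rewrite lt_neqAle eq_sym ap nrm_ge0.
have b0 : 0 < b by rewrite lt_neqAle eq_sym bp nrm_ge0.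
set u' := b *: u; set v' := a *: v.
have d0 : dot u' v' = 0.
  rewrite /dot big1 // => i _; rewrite !mxE.
  by case: (dis i) => ->; rewrite ?mulr0 ?mul0r.
have nu : norm2sq u' = a ^+ 2 * b ^+ 2 by rewrite norm2sqZ -nrm_sq mulrC.
have nv : norm2sq v' = a ^+ 2 * b ^+ 2 by rewrite norm2sqZ -nrm_sq.
have sp : forall w : 'cV[R]_N, (forall i, u i 0 = 0 -> v i 0 = 0 -> w i 0 = 0) ->
    sparse s w.
  move=> w hw; rewrite /sparse; apply: leq_trans cs; apply: subset_leq_card.
  apply/fintype.subsetP => i; rewrite !inE; apply: contraR.
  by rewrite negb_or !negbK => /andP[/eqP h1 /eqP h2]; rewrite hw.
have spP : sparse s (u' + v') by apply: sp => i h1 h2; rewrite !mxE h1 h2; ring.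
have spM : sparse s (u' - v') by apply: sp => i h1 h2; rewrite !mxE h1 h2; ring.
have [_ r1] := andP (rip _ spP).
have [r2 _] := andP (rip _ spM).
rewrite mulmxDr norm2sqD norm2sqD d0 nu nv in r1.
rewrite mulmxBr !norm2sqD !dotNr !norm2sqN d0 nu nv in r2.
have e : dot (phi *m u') (phi *m v') = a * b * dot (phi *m u) (phi *m v).
  by rewrite /u' /v' -!scalemxAr dotZl dotZr mulrA (mulrC b).
rewrite e in r1 r2.
have ab0 : 0 < a * b by rewrite mulr_gt0.
rewrite -(ler_pM2l ab0).
set D := dot _ _ in r1 r2 *.
have -> : a * b * (d * a * b) = d * (a ^+ 2 * b ^+ 2) by rewrite !expr2; ring.
set X := a ^+ 2 * b ^+ 2 in r1 r2 *.
set Y := a * b * D in r1 r2 *.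
set Z := norm2sq (phi *m u') in r1 r2.
set W := norm2sq (phi *m v') in r1 r2.
lra.
Qed.

Lemma cross_abs N P s (phi : 'M[R]_(P, N)) d (u v : 'cV[R]_N) :
  RIP s phi d -> (forall i, u i 0 = 0 \/ v i 0 = 0) ->
  (#|supp u :|: supp v| <= s)%N ->
  `|dot (phi *m u) (phi *m v)| <= d * nrm u * nrm v.
Proof.
move=> rip dis cs; rewrite ler_norml; apply/andP; split; first last.
  exact: (cross rip dis cs).
have dis' : forall i, u i 0 = 0 \/ (- v) i 0 = 0.
  by move=> i; rewrite mxE; case: (dis i) => ->; [left|right; rewrite oppr0].
have suppN : supp (- v) = supp v by apply/setP => i; rewrite !inE mxE oppr_eq0.
have := cross rip dis'; rewrite suppN => /(_ cs).
by rewrite mulmxN dotNr /nrm norm2sqN lerNl.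
Qed.

End Vec.


Section Mask.
Variable R : realType.
Variables (N : nat) (g : 'I_N -> R).

Definition mk (S : {set 'I_N}) : 'cV[R]_N := \col_i (if i \in S then g i else 0).

Lemma mk_supp (S : {set 'I_N}) : (supp (mk S) \subset S)%N.
Proof.
apply/fintype.subsetP => i; rewrite inE mxE; by case: (i \in S); rewrite ?eqxx.
Qed.

Lemma mk_supp2 (S T : {set 'I_N}) : (#|supp (mk S) :|: supp (mk T)| <= #|S| + #|T|)%N.
Proof.
rewrite cardsU; apply: leq_trans (leq_subr _ _) _.
by apply: leq_add; apply: subset_leq_card; exact: mk_supp.
Qed.

Lemma mk_dis (S T : {set 'I_N}) : (forall i, i \in S -> i \notin T) ->
  forall i, (mk S) i 0 = 0 \/ (mk T) i 0 = 0.
Proof.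
move=> H i; rewrite !mxE; case: (boolP (i \in S)) => iS; last by left.
by right; rewrite (negbTE (H i iS)).
Qed.

Lemma mk_norm2sq (S : {set 'I_N}) : norm2sq (mk S) = \sum_(i in S) `|g i| ^+ 2.
Proof.
rewrite /norm2sq [RHS]big_mkcond; apply: eq_bigr => i _; rewrite mxE.
by case: (i \in S); rewrite ?real_normK ?num_real // expr0n.
Qed.

Lemma mkU (S T : {set 'I_N}) : (forall i, i \in S -> i \notin T) -> mk S + mk T = mk (S :|: T).
Proof.
move=> H; apply/matrixP => i j; rewrite !mxE inE.
case: (boolP (i \in S)) => iS /=; last by rewrite add0r.
by rewrite (negbTE (H i iS)) addr0.
Qed.

Lemma mk_norm2sqU (S T : {set 'I_N}) : (forall i, i \in S -> i \notin T) ->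
  norm2sq (mk S + mk T) = norm2sq (mk S) + norm2sq (mk T).
Proof.
move=> H; rewrite norm2sqD.
rewrite (_ : dot (mk S) (mk T) = 0) ?mulr0 ?addr0 //.
rewrite /dot big1 // => i _; by case: (mk_dis H i) => ->; rewrite ?mulr0 ?mul0r.
Qed.
End Mask.

Lemma cauchy_set (R : realType) (N : nat) (S : {set 'I_N}) (g : 'I_N -> R) :
  (\sum_(i in S) g i) ^+ 2 <= #|S|%:R * \sum_(i in S) g i ^+ 2.
Proof.
have H : 0 <= \sum_(i in S) \sum_(j in S) (g i - g j) ^+ 2.
  by apply: sumr_ge0 => i _; apply: sumr_ge0 => j _; exact: sqr_ge0.
have E : \sum_(i in S) \sum_(j in S) (g i - g j) ^+ 2 =
  2 * (#|S|%:R * \sum_(i in S) g i ^+ 2) - 2 * (\sum_(i in S) g i) ^+ 2.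
  have E1 : forall i, \sum_(j in S) (g i - g j) ^+ 2 =
     #|S|%:R * g i ^+ 2 - 2 * g i * \sum_(j in S) g j + \sum_(j in S) g j ^+ 2.
    move=> i; rewrite (eq_bigr (fun j => g i ^+ 2 - 2 * g i * g j + g j ^+ 2)); last first.
      by move=> j _; ring.
    by rewrite big_split /= sumrB sumr_const mulr_sumr (mulr_natl (g i ^+ 2) #|S|).
  rewrite (eq_bigr _ (fun i _ => E1 i)) big_split sumrB /= sumr_const.
  rewrite -mulr_sumr -mulr_suml -mulr_sumr.
  set A := \sum_(i in S) g i; set B := \sum_(i in S) g i ^+ 2.
  rewrite -(mulr_natl B #|S|) -/B; ring.
rewrite E subr_ge0 in H.
by rewrite -(ler_pM2l (_ : (0 : R) < 2)) ?ltr0n.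
Qed.


Lemma sum_blk (R : realType) N s (U : {set 'I_N}) (a : 'I_N -> R) (i : 'I_N) (c : R) :
  \sum_(k < N.+1) (if i \in Bk s U a k then c else 0) = if i \in U then c else 0.
Proof.
case: (boolP (i \in U)) => iU.
  rewrite (bigD1 (Ordinal (blk_lt s U a i))) //= inE iU eqxx /= big1 ?addr0 //.
  move=> k nk; rewrite inE iU /=; case: eqP => // e; move: nk.
  by rewrite (_ : k = Ordinal (blk_lt s U a i)) ?eqxx //; apply: val_inj.
by rewrite big1 // => k _; rewrite inE (negbTE iU).
Qed.

Lemma sqr_le (R : realType) (x y : R) : 0 <= x -> 0 <= y -> x ^+ 2 <= y ^+ 2 -> x <= y.
Proof. move=> hx hy h; nra. Qed.

Lemma recovery (R : realType) N P s (phi : 'M[R]_(P, N)) (d : R) (x z : 'cV[R]_N) :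
  (0 < s)%N -> 0 <= d -> d < Num.sqrt 2 - 1 -> RIP (2 * s) phi d ->
  sparse s x -> phi *m z = phi *m x -> norm1 z <= norm1 x -> z = x.
Proof.
move=> s0 d0 dlt rip spx Ez n1.
set hv := z - x.
have Ph : phi *m hv = 0 by rewrite mulmxBr Ez subrr.
pose hh i := hv i 0.
pose a i := `|hh i|.
have a0 : forall i, 0 <= a i by move=> i; exact: normr_ge0.
pose T0 := supp x.
pose U := ~: T0.
have UE : forall i, (i \in U) = (i \notin T0) by move=> i; rewrite inE.
have cone : \sum_(i in U) a i <= \sum_(i in T0) a i.
  have e1 : norm1 z = \sum_(i in T0) `|x i 0 + hh i| + \sum_(i in U) a i.
    rewrite /norm1 (bigID (fun i => i \in T0)) /=; congr (_ + _).
      by apply: eq_bigr => i _; rewrite /hh /hv !mxE; congr `|_|; ring.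
    apply: eq_big => [i|i]; first by rewrite /U finset.in_setC.
    move=> iU; rewrite /a /hh /hv !mxE.
    by move: iU; rewrite /U !inE negbK => /eqP ->; rewrite subr0.
  have e2 : norm1 x = \sum_(i in T0) `|x i 0|.
    rewrite /norm1 (bigID (fun i => i \in T0)) /= [X in _ + X]big1 ?addr0 //.
    by move=> i; rewrite inE negbK => /eqP ->; rewrite normr0.
  have e3 : \sum_(i in T0) `|x i 0| - \sum_(i in T0) a i <=
            \sum_(i in T0) `|x i 0 + hh i|.
    rewrite -sumrB; apply: ler_sum => i _.
    by rewrite /a; exact: lerB_normD.
  move: n1; rewrite e1 e2; lra.
pose B k := Bk s U a k.
pose hk k := mk hh (B k).
pose h0 := mk hh T0.
have BU : forall k i, i \in B k -> i \notin T0.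
  by move=> k i; rewrite /B /Bk inE /U finset.in_setC => /andP[].
have Bb : forall k i, i \in B k -> blk s U a i = k.
  by move=> k i; rewrite /B /Bk inE => /andP[_ /eqP].
have cT0 : (#|T0| <= s)%N by exact: spx.
have dec : hv = h0 + \sum_(k < N.+1) hk k.
  apply/matrixP => i j; rewrite (ord1 j) [RHS]mxE summxE.
  rewrite (eq_bigr (fun k : 'I_N.+1 => if i \in B k then hh i else 0)); last first.
    by move=> k _; rewrite mxE.
  rewrite sum_blk /U finset.in_setC; change (hh i = mk hh T0 i 0 + (if i \notin T0 then hh i else 0)).
  rewrite mxE; by case: (i \in T0); rewrite ?add0r ?addr0.
pose h01 := h0 + hk 0%N.
pose S := \sum_(k < N) nrm (hk k.+1).
have e01 : phi *m h01 = - \sum_(k < N) phi *m hk k.+1.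
  move: Ph; rewrite dec big_ord_recl mulmxDr mulmxDr addrA mulmx_sumr.
  by move/eqP; rewrite addr_eq0 -mulmxDr => /eqP ->.
have key : norm2sq (phi *m h01) <= d * (nrm h0 + nrm (hk 0%N)) * S.
  rewrite norm2sq_dot {2}e01 dotNr dot_sumr /S mulr_sumr -sumrN.
  apply: ler_sum => k _.
  rewrite /h01 mulmxDr dotDl opprD mulrDr mulrDl.
  have c1 : `|dot (phi *m h0) (phi *m hk k.+1)| <= d * nrm h0 * nrm (hk k.+1).
    apply: cross_abs rip _ _.
      by apply: mk_dis => i iT; apply/negP => /BU; rewrite iT.
    apply: leq_trans (mk_supp2 _ _ _) _.
    by rewrite mul2n -addnn leq_add // Bk_card.
  have c2 : `|dot (phi *m hk 0%N) (phi *m hk k.+1)| <= d * nrm (hk 0%N) * nrm (hk k.+1).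
    apply: cross_abs rip _ _.
      by apply: mk_dis => i /Bb b0; apply/negP => /Bb; rewrite b0.
    apply: leq_trans (mk_supp2 _ _ _) _.
    by rewrite mul2n -addnn leq_add // Bk_card.
  have t1 := ler_norm (- dot (phi *m h0) (phi *m hk k.+1)); rewrite normrN in t1.
  have t2 := ler_norm (- dot (phi *m hk 0%N) (phi *m hk k.+1)); rewrite normrN in t2.
  lra.
have dis01 : forall i, i \in T0 -> i \notin B 0%N.
  by move=> i iT; apply/negP => /BU; rewrite iT.
have h01E : h01 = mk hh (T0 :|: B 0%N) by rewrite /h01 /h0 /hk mkU.
have lower : (1 - d) * norm2sq h01 <= norm2sq (phi *m h01).
  have sp : sparse (2 * s) h01.
    rewrite /sparse h01E; apply: leq_trans (subset_leq_card (mk_supp _ _)) _.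
    rewrite cardsU; apply: leq_trans (leq_subr _ _) _.
    by rewrite mul2n -addnn leq_add // Bk_card.
  by have /andP[r _] := rip h01 sp.
have n01 : norm2sq h01 = norm2sq h0 + norm2sq (hk 0%N) by apply: mk_norm2sqU.
have al0 : 0 <= nrm h0 := nrm_ge0 _.
have be0 : 0 <= nrm (hk 0%N) := nrm_ge0 _.
have r0 : 0 <= nrm h01 := nrm_ge0 _.
have r2 : nrm h01 ^+ 2 = nrm h0 ^+ 2 + nrm (hk 0%N) ^+ 2 by rewrite !nrm_sq.
have nr01 : norm2sq (phi *m h01) = norm2sq (phi *m h01) by [].
rewrite -nrm_sq in lower.
set al := nrm h0 in al0 r2 key *; set be := nrm (hk 0%N) in be0 r2 key *.
set r := nrm h01 in r0 r2 lower *.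
have s2 : 0 <= Num.sqrt (2 : R) := sqrtr_ge0 _.
have s22 : Num.sqrt (2 : R) ^+ 2 = 2 by rewrite sqr_sqrtr // ler0n.
have albe : al + be <= Num.sqrt 2 * r.
  apply: sqr_le; [exact: addr_ge0 | exact: mulr_ge0 |].
  rewrite exprMn s22 r2; have := sqr_ge0 (al - be); rewrite !expr2 => hh2; nra.
have ss0 : 0 < Num.sqrt (s%:R : R) by rewrite sqrtr_gt0 ltr0n.
have ss2 : Num.sqrt (s%:R : R) ^+ 2 = s%:R by rewrite sqr_sqrtr // ler0n.
have step1 : forall k, Num.sqrt s%:R * nrm (hk k.+1) <= \sum_(j in B k) a j.
  move=> k; apply: sqr_le; [exact: mulr_ge0 (ltW ss0) (nrm_ge0 _)|exact: sumr_ge0|].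
  rewrite exprMn ss2 nrm_sq mk_norm2sq; exact: (Bk_ineq U s0 k a0).
have step2 : \sum_(k < N) \sum_(j in B k) a j <= \sum_(i in U) a i.
  have -> : \sum_(i in U) a i = \sum_(k < N.+1) \sum_(j in B k) a j.
    rewrite (eq_bigr (fun k : 'I_N.+1 => \sum_j (if j \in B k then a j else 0)));
      last by move=> k _; rewrite big_mkcond.
    rewrite exchange_big /= big_mkcond; apply: eq_bigr => i _.
    by rewrite sum_blk.
  rewrite big_ord_recr /= lerDl; exact: sumr_ge0.
have step3 : \sum_(i in T0) a i <= Num.sqrt s%:R * al.
  apply: sqr_le; [exact: sumr_ge0|exact: mulr_ge0 (ltW ss0) al0|].
  rewrite exprMn ss2 /al nrm_sq mk_norm2sq.
  apply: le_trans (cauchy_set T0 a) _.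
  apply: ler_wpM2r; first by apply: sumr_ge0 => i _; exact: sqr_ge0.
  by rewrite ler_nat.
have Sle : S <= al.
  rewrite -(ler_pM2l ss0) /S mulr_sumr.
  apply: (le_trans (y := \sum_(k < N) \sum_(j in B k) a j)); first by apply: ler_sum => k _; exact: step1.
  by apply: le_trans step2 _; apply: le_trans cone _.
have alr : al <= r.
  by rewrite /al /r /nrm; apply: ler_wsqrtr; rewrite n01 lerDl norm2sq_ge0.
have S0 : 0 <= S by apply: sumr_ge0 => k _; exact: nrm_ge0.
have rr : r ^+ 2 <= 0.
  have k2 : (1 - d) * r ^+ 2 <= d * (Num.sqrt 2 * r) * r.
    apply: le_trans lower (le_trans key _).
    apply: ler_pM; [exact: mulr_ge0 (addr_ge0 _ _)| exact: S0 | |exact: le_trans Sle alr].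
    by apply: ler_wpM2l.
  have c : 0 < 1 - d - d * Num.sqrt 2 by nra.
  nra.
have r00 : r = 0 by apply/eqP; rewrite -sqrf_eq0 eq_le rr sqr_ge0.
have sT : \sum_(i in T0) a i <= 0.
  have al00 : al = 0 by apply/le_anti; rewrite al0 andbT -r00 alr.
  by rewrite al00 mulr0 in step3.
have sA : \sum_i a i = 0.
  apply/le_anti; rewrite sumr_ge0 // andbT.
  rewrite (bigID (fun i => i \in T0)) /=.
  have -> : \sum_(i | i \notin T0) a i = \sum_(i in U) a i.
    by apply: eq_big => // i; rewrite /U finset.in_setC.
  have := le_trans cone sT; lra.
have hv0 : hv = 0.
  apply/matrixP => i j; rewrite (ord1 j) [RHS]mxE.
  have := psumr_eq0P (fun i _ => a0 i) sA (i := i) isT.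
  move=> e; change (hh i = 0).
  by apply/eqP; rewrite -normr_eq0; apply/eqP.
by apply/eqP; rewrite -subr_eq0 -/hv hv0.
Qed.


Lemma cauchy_full (R : realType) (N : nat) (g : 'I_N -> R) :
  (\sum_i g i) ^+ 2 <= N%:R * \sum_i g i ^+ 2.
Proof.
have := cauchy_set [set: 'I_N] g.
rewrite cardsT card_ord.
have E : forall F : 'I_N -> R, \sum_(i in [set: 'I_N]) F i = \sum_i F i.
  by move=> F; apply: eq_bigl => i; rewrite finset.in_setT.
by rewrite !E.
Qed.

Lemma term_le_sum (R : realType) (N : nat) (g : 'I_N -> R) j :
  (forall i, 0 <= g i) -> g j <= \sum_i g i.
Proof.
move=> g0; rewrite (bigD1 j) //= lerDl; exact: sumr_ge0.
Qed.

Lemma op_bound (R : realType) N P (phi : 'M[R]_(P, N)) (x : 'cV[R]_N) :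
  norm2sq (phi *m x) <= N%:R * (\sum_p \sum_i phi p i ^+ 2) * norm2sq x.
Proof.
rewrite /norm2sq -mulrA mulr_suml mulr_sumr.
apply: ler_sum => p _.
rewrite mxE; apply: le_trans (cauchy_full _) _.
apply: ler_wpM2l; first exact: ler0n.
rewrite mulr_sumr; apply: ler_sum => i _; rewrite exprMn.
apply: ler_wpM2r; first exact: sqr_ge0.
by apply: term_le_sum => k; exact: sqr_ge0.
Qed.

Lemma ric_RIP (R : realType) N P s (phi : 'M[R]_(P, N)) :
  ric s phi < Num.sqrt 2 - 1 ->
  exists d : R, [/\ 0 <= d, d < Num.sqrt 2 - 1 & RIP s phi d].
Proof.
move=> hr.
set C := N%:R * (\sum_p \sum_i phi p i ^+ 2).
have C0 : 0 <= C.
  apply: mulr_ge0; first exact: ler0n.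
  by apply: sumr_ge0 => p _; apply: sumr_ge0 => i _; exact: sqr_ge0.
have ne : ([set d : R | forall x : 'cV[R]_N, sparse s x ->
        (1 - d) * norm2sq x <= norm2sq (phi *m x) <= (1 + d) * norm2sq x] !=set0)%classic.
  exists (C + 1) => x _; apply/andP; split.
    apply: le_trans (norm2sq_ge0 _); have := norm2sq_ge0 x; nra.
  apply: le_trans (op_bound _ _) _; apply: ler_wpM2r; first exact: norm2sq_ge0.
  rewrite -/C; lra.
have [y Sy ylt] := inf_lt ne hr.
case: (lerP 0 y) => y0.
  by exists y; split.
exists 0; split => //.
  have s2 : 0 <= Num.sqrt (2 : R) := sqrtr_ge0 _.
  have s22 : Num.sqrt (2 : R) ^+ 2 = 2 by rewrite sqr_sqrtr // ler0n.
  rewrite expr2 in s22; nra.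
move=> x sx; have /andP[l1 l2] := Sy x sx; have n0 := norm2sq_ge0 x.
apply/andP; split; nra.
Qed.

Unset Implicit Arguments. Set Strict Implicit. Set Printing Implicit Defensive.

Theorem mainTheorem4 (R : realType) (N P : nat)
  (A : 'I_N -> 'I_N -> bool) (f : 'I_N -> R -> R) (h : 'I_N -> 'I_N -> R -> R -> R)
  (delta : R) (eps : 'I_N -> R) (phi : 'I_N -> 'M[R]_(P, N)) :
  (forall i : 'I_N, A i i = false) ->
  (forall i : 'I_N, f i 0 = 0) ->
  0 < delta ->
  (forall i j : 'I_N, h i j 0 0 = 0 /\ (forall v : R, 0 < `|v| < delta -> h i j 0 v != 0)) ->
  (forall q : 'I_N, 0 < `|eps q| < delta) ->
  (P < N)%N ->
  (forall q : 'I_N, ric (2 * (maxoutdeg A).+1) (phi q) < Num.sqrt 2 - 1) ->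
  let x1 := fun q : 'I_N => nds_step A f h (pinch q (eps q)) in
  let y1 := fun q : 'I_N => phi q *m x1 q in
  (forall q : 'I_N, forall z : 'cV[R]_N, l1_solution (phi q) (y1 q) z <-> z = x1 q) /\
  (forall q : 'I_N, supp (x1 q) :\ q = L1 A q) /\
  (forall i j : 'I_N, forall xs : 'cV[R]_N, l1_solution (phi j) (y1 j) xs ->
     (A i j <-> i != j /\ i \in supp xs)).
Proof.
move=> Aii f0 dpos hH epsH _ ricH x1 y1.
have x1E : forall q i, i != q -> x1 q i 0 = if A i q then h i q 0 (eps q) else 0.
  move=> q i niq; rewrite /x1 /nds_step mxE /pinch mxE (negbTE niq) f0.
  rewrite (bigD1 q) //= mxE eqxx add0r big1 ?addr0 //.
  move=> j njq; rewrite !mxE (negbTE njq).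
  by case: (A i j) => //; case: (hH i j).
have suppE : forall q, supp (x1 q) :\ q = L1 A q.
  move=> q; apply/setP => i; rewrite !inE.
  case: (eqVneq i q) => [->|niq] /=; first by rewrite Aii.
  rewrite x1E //; case: (A i q); last by rewrite eqxx.
  by case: (hH i q) => _ ->.
have spx : forall q, sparse (maxoutdeg A).+1 (x1 q).
  move=> q; rewrite /sparse.
  have sub : (supp (x1 q) \subset q |: L1 A q)%N.
    rewrite -suppE; apply/fintype.subsetP => i iS; rewrite !inE.
    rewrite inE in iS; by rewrite iS andbT orbN.
  apply: leq_trans (subset_leq_card sub) _.
  rewrite cardsU1 -add1n; apply: leq_add; first by case: (q \notin _).
  rewrite /maxoutdeg; apply: leq_trans (leq_bigmax q); rewrite /outdeg /L1 /=.
  apply/eq_leq/eq_card => i; rewrite finset.inE.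
  by apply/idP/idP => H; [rewrite in_setE | rewrite in_setE in H].
have sol : forall q z, l1_solution (phi q) (y1 q) z <-> z = x1 q.
  move=> q z.
  have [d [d0 dlt rip]] := ric_RIP (ricH q).
  split.
    move=> [Ez Hmin]; apply: (recovery (ltn0Sn _) d0 dlt rip (spx q) Ez).
    exact: Hmin.
  move=> ->; split => // z' Ez'.
  case: (lerP (norm1 (x1 q)) (norm1 z')) => // lt.
  have e := recovery (ltn0Sn _) d0 dlt rip (spx q) Ez' (ltW lt).
  by rewrite e ltxx in lt.
split; first exact: sol.
split; first exact: suppE.
move=> i j xs /sol ->.
have := suppE j; move/setP/(_ i); rewrite !inE => e.
by split; [move=> Aij; move: e; rewrite Aij => /andP[] | case=> n1 n2; rewrite -e n1 n2].
Qed.
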